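(* Let $\tau>\frac{3+\sqrt{17}}{2}$. Then for (Lebesgue) almost every $\gamma>0$, the set $D_{\gamma,\tau}$ is a Cantor set.
   Context: For $x\in\mathbb{R}$, $\|x\|:=\min_{p\in\mathbb{Z}}|x-p|$. Let $\mathbb{N}=\{1,2,3,\dots\}$. For $\gamma>0$ and $\tau\ge 1$, $D_{\gamma,\tau}:=\{\alpha\in(0,1):\ \|q\alpha\|\ge \gamma/q^{\tau}\ \text{for all } q\in\mathbb{N}\}$. A set $X\subset\mathbb{R}$ is a Cantor set if it is closed, totally disconnected and perfect (every point of $X$ is an accumulation point of $X$). *)

(* Defs.v *)
From HB Require Import structures.
From mathcomp Require Import all_boot all_order all_algebra.
From mathcomp Require Import all_classical all_reals all_analysis.
Set Implicit Arguments. Unset Strict Implicit. Unset Printing Implicit Defensive.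
Import Order.TTheory GRing.Theory Num.Theory.
Import numFieldNormedType.Exports.
Local Open Scope classical_set_scope.
Local Open Scope ring_scope.

(* ||x|| := min_{p in Z} |x - p| (the minimum is attained; we use inf). *)
Definition dist_int {R : realType} (x : R) : R :=
  inf [set `|x - p%:~R| | p in [set: int]].

Definition Dset {R : realType} (gamma tau : R) : set R :=
  [set alpha | 0 < alpha < 1 /\
     forall q : nat, (0 < q)%N ->
       gamma / (q%:R `^ tau) <= dist_int (q%:R * alpha)].

Definition cantor_set {R : realType} (X : set R) : Prop :=
  closed X /\ totally_disconnected X /\ X `<=` limit_point X.

(* Main.v *)
Require Import Defs.
From HB Require Import structures.
From mathcomp Require Import all_boot all_order all_algebra.
From mathcomp Require Import all_classical all_reals all_analysis.
From mathcomp Require Import ring lra zify.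
Import Order.TTheory GRing.Theory Num.Theory.
Import numFieldNormedType.Exports.
Local Open Scope classical_set_scope.
Local Open Scope ring_scope.
Set Implicit Arguments. Unset Strict Implicit. Unset Printing Implicit Defensive.
Section Aux.
Context {R : realType}.
Implicit Types (x y a c g tau : R).

Lemma dist_int_le x (p : int) : dist_int x <= `|x - p%:~R|.
Proof.
apply: ge_inf; last by exists p.
by exists 0 => _ [z _ <-].
Qed.

Lemma dist_int_ge x a : (forall p : int, a <= `|x - p%:~R|) -> a <= dist_int x.
Proof.
move=> H; apply: lb_le_inf; first by exists `|x - 0%:~R|, 0.
by move=> _ [z _ <-].
Qed.

Definition Pd c tau x := forall q : nat, (0 < q)%N -> forall p : int,
  c / (q%:R `^ tau) <= `|q%:R * x - p%:~R|.

Lemma DsetP c tau x : Dset c tau x <-> (0 < x < 1 /\ Pd c tau x).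
Proof.
split=> [[h1 h2]|[h1 h2]]; split => // q q0.
- by move=> p; apply: le_trans (h2 q q0) _; exact: dist_int_le.
- by apply: dist_int_ge => p; apply: h2.
Qed.

Lemma Pd_mono c g tau x : g <= c -> Pd c tau x -> Pd g tau x.
Proof.
move=> gc H q q0 p; apply: le_trans (H q q0 p).
by apply: ler_wpM2r => //; rewrite invr_ge0 powR_ge0.
Qed.

Lemma Pd1 c tau x : Pd c tau x -> c <= `|x| /\ c <= `|x - 1|.
Proof.
move=> H; have := H 1%N isT 0; have := H 1%N isT 1.
by rewrite mulr1n powR1 divr1 mul1r subr0 => ->.
Qed.

Lemma approx_closure (A : set R) x : closure A x ->
  forall e, 0 < e -> exists y, A y /\ `|x - y| < e.
Proof.
move=> clx e e0; have [y [Ay By]] := clx _ (nbhsx_ballx x e e0).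
by exists y; split => //; move: By; rewrite -ball_normE.
Qed.

Lemma Dset_closed g tau : 0 < g -> closed (Dset g tau).
Proof.
move=> g0 x clx; have ap := approx_closure clx.
apply/DsetP; split.
  have [y [/DsetP[/andP[y0 y1] Py] xy]] := ap g g0.
  have [h1 h2] := Pd1 Py.
  move: h1 h2; rewrite gtr0_norm // ltr0_norm ?subr_lt0 //.
  move: xy; rewrite ltr_norml => /andP[xy1 xy2] h1 h2.
  apply/andP; split; lra.
move=> q q0 p; apply/ler_addgt0Pr => e e0.
have qpos : 0 < q%:R :> R by rewrite ltr0n.
have [y [/DsetP[_ Py] xy]] := ap (e / q%:R) (divr_gt0 e0 qpos).
apply: le_trans (Py q q0 p) _.
have -> : q%:R * y - p%:~R = (q%:R * x - p%:~R) + q%:R * (y - x) by ring.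
apply: le_trans (ler_normD _ _) _; apply: lerD => //.
rewrite normrM gtr0_norm // distrC.
by rewrite -ler_pdivlMl // mulrC; apply: ltW.
Qed.

Lemma rat_between a b : a < b ->
  exists q : nat, exists p : int, (0 < q)%N /\ a < p%:~R / q%:R < b.
Proof.
move=> ab; exists (Num.truncn (b - a)^-1).+1, (Num.floor ((Num.truncn (b - a)^-1).+1%:R * a) + 1).
split => //.
set q := (Num.truncn (b - a)^-1).+1.
have qgt : (b - a)^-1 < q%:R by exact: truncnS_gt.
have q0 : 0 < q%:R :> R by rewrite ltr0n.
have h1 := floorD1_gt (q%:R * a).
have h2 := floor_le (q%:R * a).
rewrite rmorphD /= in h1 *.
apply/andP; split.
  by rewrite ltr_pdivlMr // mulrC.
rewrite ltr_pdivrMr //.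
have : 1 < (b - a) * q%:R.
  by rewrite -ltr_pdivrMl ?subr_gt0 // mulr1.
lra.
Qed.

Lemma Pd_notrat c tau q (p : int) : 0 < c -> (0 < q)%N -> ~ Pd c tau (p%:~R / q%:R).
Proof.
move=> c0 q0 H; have := H q q0 p.
rewrite [q%:R * _]mulrC divfK ?pnatr_eq0 -?lt0n // subrr normr0.
by apply/negP; rewrite -ltNge divr_gt0 // powR_gt0 // ltr0n.
Qed.

Lemma Dset_td g tau : 0 < g -> totally_disconnected (Dset g tau).
Proof.
move=> g0 x Dx; rewrite eqEsubset; split; last first.
  by move=> _ ->; exact: connected_component_refl.
move=> y [C [Cx CD cC] Cy]; apply: contrapT => /eqP yx.
have iC := (connected_intervalP C).1 cC.
have key : forall a b, C a -> C b -> a < b -> False.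
  move=> a b Ca Cb ab; have [q [p [q0 /andP[h1 h2]]]] := rat_between ab.
  have Cz : C (p%:~R / q%:R) by apply: (iC a b) => //; rewrite !ltW.
  by have /DsetP[_ Pz] := CD _ Cz; exact: Pd_notrat Pz.
by case: (ltgtP x y) yx => // xy _; [exact: key xy | exact: key xy].
Qed.

End Aux.
Section Meas.
Context {R : realType}.
Local Notation mu := (@lebesgue_measure R).

Lemma series_bound (M : nat) (D : R) (b : nat -> R) :
  (2 <= M)%N -> 0 <= D ->
  (forall q, b q = if (M <= q)%N then D / (q%:R - 1) - D / q%:R else 0) ->
  forall n, \sum_(0 <= q < n) b q <= D / (M%:R - 1).
Proof.
move=> M2 D0 bE.
pose T n := if (M <= n)%N then D / (n%:R - 1) else D / (M%:R - 1).
have eq : forall n, \sum_(0 <= q < n) b q + T n = D / (M%:R - 1).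
  elim=> [|n IH].
    by rewrite big_geq // add0r /T; case: (M) M2.
  rewrite big_nat_recr //= bE -IH /T.
  case: (ltngtP M n) => Mn.
  - rewrite (leqW (ltnW Mn)) -addn1 natrD addrK; ring.
  - case: (boolP (M <= n.+1)%N) => h; last by rewrite addr0.
    have -> : M = n.+1 by apply/eqP; rewrite eqn_leq h Mn.
    by rewrite -addn1 natrD addrK addr0.
  - by rewrite -Mn leqnSn -addn1 natrD addrK; ring.
move=> n; rewrite -(eq n) lerDl /T.
have M1 : 1 < M%:R :> R by rewrite ltr1n.
case: ifP => Mn; apply: divr_ge0 => //.
  by rewrite subr_ge0 (le_trans (ltW M1)) // ler_nat.
by rewrite subr_ge0 ltW.
Qed.

Lemma ineq1 (g W C0 m x K r u : R) : 0 < g -> 0 < W -> 0 <= C0 -> 2 <= m ->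
  m <= x -> x ^+ 3 <= u -> r = g / u -> K <= x * W + C0 -> 0 <= K ->
  K * (2 * r / x) <=
  (2 * g * W / m + 2 * g * C0 / m ^+ 2) / (x - 1)
   - (2 * g * W / m + 2 * g * C0 / m ^+ 2) / x.
Proof.
move=> g0 W0 C00 m2 mx xu -> KB K0.
have m0 : 0 < m by lra.
have x0 : 0 < x by lra.
have x1 : 0 < x - 1 by lra.
have u0 : 0 < u by apply: lt_le_trans xu; exact: exprn_gt0.
set D := 2 * g * W / m + 2 * g * C0 / m ^+ 2.
have -> : D / (x - 1) - D / x = D / (x * (x - 1)).
  by field; apply/andP; split; rewrite ?gt_eqF // subr_eq0 gt_eqF // ?(lt_le_trans _ mx) //; lra.
have y1 : 1 <= x / m by rewrite ler_pdivlMr // mul1r.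
have Dx : (x * W + C0) * (2 * g) <= D * x ^+ 2.
  have -> : D * x ^+ 2 = 2 * g * W * (x * (x / m)) + 2 * g * C0 * ((x / m) ^+ 2).
    rewrite /D; field; by rewrite gt_eqF.
  have h1 : x <= x * (x / m) by rewrite ler_peMr // ltW.
  have h2 : 1 <= (x / m) ^+ 2 by rewrite exprn_ege1.
  have : 2 * g * W * x <= 2 * g * W * (x * (x / m)).
    by rewrite ler_pM2l // !mulr_gt0.
  have : 2 * g * C0 * 1 <= 2 * g * C0 * ((x / m) ^+ 2).
    by rewrite ler_wpM2l // !mulr_ge0 // ltW.
  lra.
have hr : 2 * (g / u) / x <= 2 * g / x ^+ 4.
  have -> : 2 * (g / u) / x = (2 * g) * (u * x)^-1.
    by field; rewrite !gt_eqF.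
  apply: ler_wpM2l; first by rewrite mulr_ge0 // ltW.
  rewrite lef_pV2 ?posrE ?mulr_gt0 ?exprn_gt0 //.
  by rewrite exprSr ler_pM2r.
apply: le_trans (ler_wpM2l K0 hr) _.
apply: le_trans (_ : (x * W + C0) * (2 * g / x ^+ 4) <= _).
  by rewrite ler_wpM2r // divr_ge0 ?exprn_ge0 ?ltW // mulr_gt0.
rewrite mulrA ler_pdivrMr ?exprn_gt0 //.
apply: le_trans Dx _.
have D0 : 0 <= D.
  rewrite /D; apply: addr_ge0; apply: divr_ge0; rewrite ?exprn_ge0 ?(ltW m0) //.
    by rewrite !mulr_ge0 // ltW.
  by rewrite !mulr_ge0 // ltW.
have -> : D / (x * (x - 1)) * x ^+ 4 = D * (x ^+ 3 / (x - 1)).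
  by field; rewrite !gt_eqF.
apply: ler_wpM2l => //.
rewrite ler_pdivlMr //.
have -> : x ^+ 2 * (x - 1) = x ^+ 3 - x ^+ 2 by ring.
have : 0 <= x ^+ 2 by exact: exprn_ge0 (ltW x0).
lra.
Qed.

Lemma u_ge (tau : R) (q : nat) : 3 <= tau -> (0 < q)%N -> q%:R ^+ 3 <= q%:R `^ tau.
Proof.
move=> t3 q0; rewrite -powR_mulrn ?ler0n //; apply: ler_powR => //.
by rewrite ler1n.
Qed.

Lemma meas_part (tau g W a : R) (M : nat) :
  3 <= tau -> 0 < g -> 0 < W -> (2 <= M)%N ->
  (2 * g * W / M%:R + 2 * g * (2 * g + 2) / M%:R ^+ 2) / (M%:R - 1) < W ->
  exists b, a <= b <= a + W /\ forall q : nat, (M <= q)%N -> forall p : int,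
    g / q%:R `^ tau <= `|q%:R * b - p%:~R|.
Proof.
move=> t3 g0 W0 M2 DW; apply: contrapT => H.
set D := 2 * g * W / M%:R + 2 * g * (2 * g + 2) / M%:R ^+ 2.
pose r (q : nat) := g / q%:R `^ tau.
pose p0 (q : nat) := Num.floor (q%:R * a - r q).
pose K (q : nat) := (Num.truncn (q%:R * W + 2 * r q + 1)).+1.
pose I (q k : nat) := `](((p0 q)%:~R + k%:R - r q) / q%:R),
                       (((p0 q)%:~R + k%:R + r q) / q%:R)[%classic : set R.
pose F (q : nat) := if (M <= q)%N then \big[setU/set0]_(k < K q) I q k else set0.
have mI q k : measurable (I q k) by exact: measurable_itv.
have mF q : measurable (F q).
  by rewrite /F; case: ifP => _ //; apply: bigsetU_measurable => k _; exact: mI.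
have mV : measurable (`[a, a + W]%classic : set R) by exact: measurable_itv.
have M0 : (0 < M)%N by apply: leq_trans M2.
have cover : (`[a, a + W]%classic : set R) `<=` \bigcup_q F q.
  move=> b /=; rewrite in_itv /= => /andP[ab bW].
  have : ~ (forall q : nat, (M <= q)%N -> forall p : int,
    g / q%:R `^ tau <= `|q%:R * b - p%:~R|).
    by move=> h; apply: H; exists b; split => //; rewrite ab bW.
  move=> /existsNP[q /not_implyP[Mq /existsNP[p /negP]]].
  rewrite -ltNge => lt.
  have q0 : (0 < q)%N by apply: leq_trans Mq.
  have qpos : 0 < q%:R :> R by rewrite ltr0n.
  have r0 : 0 < r q by rewrite /r divr_gt0 // powR_gt0.
  move: lt; rewrite -/(r q) ltr_norml => /andP[lt1 lt2].
  have hp0 := floor_le (q%:R * a - r q).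
  have hp1 := floorD1_gt (q%:R * a - r q).
  rewrite -/(p0 q) rmorphD /= in hp0 hp1.
  have qab : q%:R * a <= q%:R * b by rewrite ler_pM2l.
  have qbW : q%:R * b <= q%:R * a + q%:R * W by rewrite -mulrDr ler_pM2l.
  have pp : p0 q < p by rewrite -(ltr_int R); lra.
  set k := `|p - p0 q|%N.
  have kE : k%:R = p%:~R - (p0 q)%:~R :> R.
    by rewrite natr_absz ger0_norm ?subr_ge0 ?ltW // rmorphB.
  exists q => //; rewrite /F Mq -bigcup_mkord; exists k.
    rewrite /= -(ltr_nat R) /K.
    apply: (lt_trans _ (truncnS_gt _)); rewrite kE; lra.
  rewrite /I /= in_itv /= kE.
  have -> : (p0 q)%:~R + (p%:~R - (p0 q)%:~R) = p%:~R :> R by ring.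
  rewrite ltr_pdivrMr // ltr_pdivlMr //; apply/andP; split; lra.
have muV : lebesgue_measure (`[a, a + W]%classic : set R) = W%:E.
  by rewrite lebesgue_measure_itv /= lte_fin ltrDl W0 -EFinD addrAC subrr add0r.
pose bb (q : nat) := if (M <= q)%N then D / (q%:R - 1) - D / q%:R else 0.
have Fb q : (lebesgue_measure (F q) <= (bb q)%:E)%E.
  rewrite /F /bb; case: ifP => Mq; last by rewrite measure0.
  have q0 : (0 < q)%N by apply: leq_trans Mq.
  have qpos : 0 < q%:R :> R by rewrite ltr0n.
  have r0 : 0 < r q by rewrite /r divr_gt0 // powR_gt0.
  apply: le_trans.
    apply: (@content_subadditive _ _ _ lebesgue_measure _ (I q) (K q)) => //.
    - by move=> k _; exact: mI.
    - by apply: bigsetU_measurable => k _; exact: mI.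
  have mIk k : lebesgue_measure (I q k) = (2 * r q / q%:R)%:E.
    rewrite lebesgue_measure_itv /= lte_fin ltr_pM2r ?invr_gt0 // ltrD2l.
    have -> : - r q < r q by lra.
    by rewrite -EFinD; congr EFin; field; rewrite gt_eqF.
  rewrite (eq_bigr (fun=> (2 * r q / q%:R)%:E)); last by move=> k _; exact: mIk.
  rewrite sumEFin sumr_const card_ord lee_fin -[_ *+ K q]mulr_natl.
  have uq := u_ge t3 q0.
  have m2 : 2 <= M%:R :> R by rewrite ler_nat.
  have mq : M%:R <= q%:R :> R by rewrite ler_nat.
  apply: (@ineq1 g W (2 * g + 2) M%:R q%:R _ (r q) (q%:R `^ tau)) => //.
  - lra.
  - rewrite /K -addn1 natrD.
    have X0 : 0 <= q%:R * W + 2 * r q + 1.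
      by rewrite addr_ge0 // addr_ge0 // ?mulr_ge0 // ltW.
    have := truncn_le (q%:R * W + 2 * r q + 1); rewrite X0 => h.
    have : r q <= g.
      rewrite /r ler_pdivrMr ?powR_gt0 // ler_peMr ?ltW //.
      apply: lt_le_trans uq; rewrite exprn_egt1 // ltr1n; exact: leq_trans Mq.
    lra.
have D0 : 0 <= D.
  by rewrite /D addr_ge0 // divr_ge0 ?exprn_ge0 ?ler0n // ?mulr_ge0 //; lra.
have bb0 n : 0 <= bb n.
  rewrite /bb; case: ifP => // Mn.
  have n2 : 2 <= n%:R :> R by rewrite ler_nat (leq_trans M2).
  rewrite subr_ge0; apply: ler_wpM2l => //.
  rewrite lef_pV2 ?posrE; lra.
have Db : (\sum_(0 <= q <oo) (bb q)%:E <= (D / (M%:R - 1))%:E)%E.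
  apply: lime_le.
    by apply: is_cvg_nneseries => n _ _; rewrite lee_fin; exact: bb0.
  apply: nearW => n; rewrite sumEFin lee_fin.
  apply: (@series_bound M D bb) => //.
have := @measure_sigma_subadditive _ _ _ lebesgue_measure _ F mF mV cover.
move=> h.
have : (W%:E <= (D / (M%:R - 1))%:E)%E.
  rewrite -muV; apply: le_trans h _; apply: le_trans Db.
  by apply: lee_nneseries => [n _ _|n _]; [exact: measure_ge0 | exact: Fb].
by rewrite lee_fin leNgt DW.
Qed.

End Meas.
Section Key.
Context {R : realType}.

Lemma closeness (tau c g a b W A : R) (q : nat) (p : int) :
  0 < g -> g < c -> A = 2 * g / (c - g) + 2 -> (0 < q)%N ->
  c / q%:R `^ tau <= `|q%:R * a - p%:~R| ->
  `|b - a| <= 2 * W ->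
  `|q%:R * b - p%:~R| < g / q%:R `^ tau ->
  `|q%:R * a - p%:~R| < A * W * q%:R.
Proof.
move=> g0 gc -> q0 Pa ba Pb.
have qpos : 0 < q%:R :> R by rewrite ltr0n.
set v := (q%:R `^ tau)^-1.
have v0 : 0 < v by rewrite invr_gt0 powR_gt0.

have h1 : `|q%:R * a - p%:~R| <= `|q%:R * b - p%:~R| + q%:R * `|b - a|.
  have -> : q%:R * a - p%:~R = (q%:R * b - p%:~R) - q%:R * (b - a) by ring.
  by apply: le_trans (ler_normB _ _) _; rewrite normrM gtr0_norm.
have h2 : q%:R * `|b - a| <= q%:R * (2 * W) by rewrite ler_pM2l.
have eta0 : 0 < c - g by rewrite subr_gt0.
have h3 : (c - g) * v < 2 * W * q%:R.
  move: Pa Pb; rewrite -/v => Pa Pb; lra.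
have h4 : g * v <= g * (2 * W * q%:R / (c - g)).
  rewrite ler_pM2l // ler_pdivlMr //; rewrite mulrC; exact: ltW.
have -> : (2 * g / (c - g) + 2) * W * q%:R = g * (2 * W * q%:R / (c - g)) + 2 * W * q%:R.
  by field; rewrite gt_eqF.
move: Pb; rewrite -/v => Pb; lra.
Qed.

Lemma uniq_close (a A W : R) (M q q0 : nat) (p p0 : int) :
  0 < W -> 0 < A -> 2 * A * W * M%:R ^+ 2 = 1 ->
  (q < M)%N -> (q0 < M)%N ->
  `|q%:R * a - p%:~R| < A * W * q%:R ->
  `|q0%:R * a - p0%:~R| < A * W * q0%:R ->
  p * q0%:Z = p0 * q%:Z.
Proof.
move=> W0 A0 AWM qM q0M h h0.
set z := p * q0%:Z - p0 * q%:Z.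
suff : z = 0 by rewrite /z => /eqP; rewrite subr_eq0 => /eqP.
have zE : z%:~R = q%:R * (q0%:R * a - p0%:~R) - q0%:R * (q%:R * a - p%:~R) :> R.
  by rewrite /z rmorphB /= !rmorphM /= !pmulrn; ring.
have : `|z%:~R| < 2 * A * W * M%:R ^+ 2 :> R.
  rewrite zE; apply: le_lt_trans (ler_normB _ _) _.
  rewrite !normrM (ger0_norm (ler0n _ q)) (ger0_norm (ler0n _ q0)).
  have hq : q%:R < M%:R :> R by rewrite ltr_nat.
  have hq0 : q0%:R < M%:R :> R by rewrite ltr_nat.
  have e1 : q%:R * `|q0%:R * a - p0%:~R| <= q%:R * (A * W * q0%:R).
    by rewrite ler_wpM2l ?ler0n // ltW.
  have e2 : q0%:R * `|q%:R * a - p%:~R| <= q0%:R * (A * W * q%:R).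
    by rewrite ler_wpM2l ?ler0n // ltW.
  have e3 : q%:R * q0%:R < M%:R ^+ 2 :> R.
    rewrite expr2; apply: le_lt_trans (_ : q%:R * q0%:R <= q%:R * M%:R) _.
      by rewrite ler_wpM2l ?ler0n // ltW.
    rewrite ltr_pM2r ?ltr0n //; by apply: leq_ltn_trans qM.
  have AW0 : 0 < A * W by rewrite mulr_gt0.
  have e4 : 2 * (A * W) * (q%:R * q0%:R) < 2 * (A * W) * M%:R ^+ 2.
    by rewrite ltr_pM2l // mulr_gt0.
  have -> : 2 * A * W * M%:R ^+ 2 = 2 * (A * W) * M%:R ^+ 2 by ring.
  have : q%:R * (A * W * q0%:R) + q0%:R * (A * W * q%:R) = 2 * (A * W) * (q%:R * q0%:R) by ring.
  lra.
rewrite AWM -intr_norm ltrz1 => h1.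
by lia.
Qed.

End Key.
Section Key2.
Context {R : realType}.

Lemma inv_lt (m z : R) : 0 < z -> z^-1 < m -> m^-1 < z.
Proof.
move=> z0 h; have m0 : 0 < m by apply: lt_trans h; rewrite invr_gt0.
by rewrite -(invrK z) ltf_pV2 ?posrE ?invr_gt0.
Qed.

Lemma key (tau c g al eps : R) : 3 <= tau -> 0 < g -> g < c -> 0 < al < 1 ->
  Pd c tau al -> 0 < eps ->
  exists b, [/\ b != al, `|b - al| < eps, 0 < b < 1 & Pd g tau b].
Proof.
move=> t3 g0 gc /andP[al0 al1] Pc e0.
have eta0 : 0 < c - g by rewrite subr_gt0.
set A := 2 * g / (c - g) + 2.
have A2 : 2 <= A by rewrite lerDr divr_ge0 ?ltW // mulr_gt0.
set C0 := 2 * g + 2.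
set big := 2 * g + 4 * g * C0 * A + 1 + eps^-1 + al^-1 + (1 - al)^-1.
have big0 : 0 <= 2 * g + 4 * g * C0 * A.
  by rewrite addr_ge0 ?mulr_ge0 // ?ltW // /C0; lra.
have ie : 0 < eps^-1 by rewrite invr_gt0.
have ia : 0 < al^-1 by rewrite invr_gt0.
have ia1 : 0 < (1 - al)^-1 by rewrite invr_gt0 subr_gt0.
set M := (Num.truncn big).+2.
set m := M%:R : R.
have mbig : big + 1 < m.
  rewrite /m /M -addn1 natrD ltrD2r; exact: truncnS_gt.
have m2 : 2 <= m by rewrite /m ler_nat.
have M2 : (2 <= M)%N by [].
set W := (2 * A * m ^+ 2)^-1.
have m0 : 0 < m by lra.
have W0 : 0 < W by rewrite invr_gt0 !mulr_gt0 ?exprn_gt0 //; lra.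
have AWM : 2 * A * W * m ^+ 2 = 1 by rewrite /W mulrAC mulfV // gt_eqF // !mulr_gt0 ?exprn_gt0 //; lra.
have W2m : 2 * W <= m^-1.
  rewrite /W invfM.
  have -> : 2 * ((2 * A)^-1 * (m ^+ 2)^-1) = A^-1 * m^-1 * m^-1.
    by field; rewrite !gt_eqF //; lra.
  rewrite -[leRHS]mul1r ler_pM2r ?invr_gt0 //.
  have h1 : A^-1 <= 1 by rewrite invf_le1; lra.
  have h2 : m^-1 <= 1 by rewrite invf_le1; lra.
  have : 0 <= A^-1 by rewrite invr_ge0; lra.
  by nra.
have mb := mbig; rewrite /big in mb.
have We : 2 * W < eps by apply: le_lt_trans W2m _; apply: inv_lt => //; lra.
have Wa : 2 * W < al by apply: le_lt_trans W2m _; apply: inv_lt => //; lra.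
have Wa1 : 2 * W < 1 - al by apply: le_lt_trans W2m _; apply: inv_lt; lra.
have DW : (2 * g * W / m + 2 * g * (2 * g + 2) / m ^+ 2) / (m - 1) < W.
  have -> : (2 * g * W / m + 2 * g * (2 * g + 2) / m ^+ 2) / (m - 1)
      = W * ((2 * g / m + 4 * g * C0 * A) / (m - 1)).
    rewrite /W /C0; field; rewrite !gt_eqF //; lra.
  rewrite -[ltRHS]mulr1 ltr_pM2l // ltr_pdivrMr ?mul1r; last lra.
  have : 2 * g / m <= g.
    by rewrite ler_pdivrMr // [2 * g]mulrC ler_pM2l.
  lra.
pose S := exists q : nat, exists p : int, [/\ (0 < q)%N, (q < M)%N,
  `|q%:R * al - p%:~R| < A * W * q%:R & p%:~R < q%:R * al].
have Pc' : forall q, (0 < q)%N -> forall p : int,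
    c / q%:R `^ tau <= `|q%:R * al - p%:~R| by exact: Pc.
have [a [side ha]] : exists a, (forall b, a <= b <= a + W ->
    forall q : nat, (0 < q)%N -> (q < M)%N -> forall p : int,
    `|q%:R * al - p%:~R| < A * W * q%:R ->
    `|q%:R * al - p%:~R| <= `|q%:R * b - p%:~R|) /\
    (forall b, a <= b <= a + W -> W <= `|b - al| <= 2 * W).
  case: (pselect S) => [[qq [pp [qq0 qqM hh0 ss0]]]|nS].
  - exists (al + W); split => [b /andP[b1 b2] q q0 qM p hq|b /andP[b1 b2]].
      have A0 : 0 < A by lra.
      have E := uniq_close W0 A0 AWM qM qqM hq hh0.
      have qpos : 0 < q%:R :> R by rewrite ltr0n.
      have q0pos : 0 < qq%:R :> R by rewrite ltr0n.
      have E' : p%:~R * qq%:R = pp%:~R * q%:R :> R.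
        by have := congr1 (fun z : int => z%:~R : R) E; rewrite /= !intrM; exact.
      have sp : p%:~R < q%:R * al.
        rewrite -(ltr_pM2r q0pos) E'.
        have -> : q%:R * al * qq%:R = q%:R * (qq%:R * al) by ring.
        by rewrite mulrC ltr_pM2l.
      have qb : q%:R * al <= q%:R * b by rewrite ler_pM2l //; lra.
      rewrite !ger0_norm; lra.
    rewrite ger0_norm; lra.
  - exists (al - 2 * W); split => [b /andP[b1 b2] q q0 qM p hq|b /andP[b1 b2]].
      have sp : q%:R * al <= p%:~R.
        rewrite leNgt; apply/negP => sp; apply: nS.
        by exists q, p; split.
      have qpos : 0 < q%:R :> R by rewrite ltr0n.
      have qb : q%:R * b <= q%:R * al by rewrite ler_pM2l //; lra.
      rewrite !ler0_norm; lra.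
    rewrite ler0_norm; lra.
have [b [hb big_q]] := meas_part a t3 g0 W0 M2 DW.
have [hb1 hb2] := andP (ha b hb).
exists b; split.
- by apply/eqP => E; move: hb1; rewrite E subrr normr0; lra.
- lra.
- move: hb2; rewrite ler_norml => /andP[? ?]; apply/andP; split; lra.
move=> q q0 p; case: (leqP M q) => Mq; first exact: big_q.
rewrite leNgt; apply/negP => lt.
have hq := closeness g0 gc (erefl A) q0 (Pc q q0 p) hb2 lt.
have := side b hb q q0 Mq p hq.
have := Pc q q0 p.
have : g / q%:R `^ tau < c / q%:R `^ tau.
  by rewrite ltr_pM2r ?invr_gt0 ?powR_gt0 // ltr0n.
lra.
Qed.

End Key2.
Section Main.
Context {R : realType}.

Definition iso (tau g : R) (ab : rat * rat) := 0 < g /\ exists al, [/\ Dset g tau al,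
  ratr ab.1 < al < ratr ab.2 &
  forall y, ratr ab.1 < y < ratr ab.2 -> Dset g tau y -> y = al].

Lemma iso_lt tau g1 g2 ab : 3 <= tau -> g1 < g2 -> iso tau g1 ab -> iso tau g2 ab -> False.
Proof.
move=> t3 lt [g10 [a1 [D1 r1 u1]]] [g20 [a2 [D2 r2 u2]]].
have /DsetP[a2b P2] := D2.
have D21 : Dset g1 tau a2 by apply/DsetP; split => //; exact: Pd_mono (ltW lt) P2.
have E := u1 _ r2 D21; subst a2.
move: r1 => /andP[ra rb].
have e0 : 0 < Num.min (a1 - ratr ab.1) (ratr ab.2 - a1).
  by rewrite lt_min !subr_gt0 ra rb.
have [b [bne bd b01 Pb]] := key t3 g10 lt a2b P2 e0.
have Db : Dset g1 tau b by apply/DsetP.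
move: bd; rewrite lt_min => /andP[h1 h2].
move: h1 h2; rewrite ltr_norml => /andP[h1 h1'] /(le_lt_trans (ler_norm _)) h2.
have : ratr ab.1 < b < ratr ab.2 by apply/andP; split; lra.
by move=> /u1 /(_ Db) E; move: bne; rewrite E eqxx.
Qed.

Lemma iso_uniq tau g1 g2 ab : 3 <= tau -> iso tau g1 ab -> iso tau g2 ab -> g1 = g2.
Proof.
move=> t3 i1 i2; case: (ltgtP g1 g2) => // h.
- by have := iso_lt t3 h i1 i2.
- by have := iso_lt t3 h i2 i1.
Qed.

Lemma isolated_iso tau g al : 0 < g -> Dset g tau al -> ~ limit_point (Dset g tau) al ->
  exists ab, iso tau g ab.
Proof.
move=> g0 Da /existsNP[U /not_implyP[nU nex]].
have [e /= e0 eU] := (nbhs_ballP _ _).1 nU.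
have h1 : al - e < al by rewrite ltrBlDr ltrDl.
have h2 : al < al + e by rewrite ltrDl.
have [r1] := rat_in_itvoo h1; rewrite in_itv /= => /andP[r1a r1b].
have [r2] := rat_in_itvoo h2; rewrite in_itv /= => /andP[r2a r2b].
exists (r1, r2); split => //; exists al; split => //=.
  by rewrite r1b r2a.
move=> y /andP[y1 y2] Dy; apply: contrapT => yal; apply: nex; exists y; split => //.
  by apply/eqP.
apply: eU; rewrite -ball_normE /= ltr_norml; apply/andP; split; lra.
Qed.

Lemma negl1 (x : R) : (@lebesgue_measure R).-negligible [set x].
Proof.
exists [set x]; split => //; last exact: lebesgue_measure_set1.
Qed.

End Main.

Unset Implicit Arguments.

Theorem mainTheorem1 (R : realType) (tau : R) :
  (3 + Num.sqrt 17) / 2 < tau ->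
  {ae (@lebesgue_measure R), forall gamma : R, 0 < gamma -> cantor_set (Dset gamma tau)}.
Proof.
move=> ht.
have t3 : 3 <= tau.
  have s0 := sqrtr_ge0 (17 : R).
  have s2 := sqr_sqrtr (ler0n R 17).
  have : 3 < Num.sqrt (17 : R) by nra.
  lra.
pose gs (n : nat) : R := if @unpickle (rat * rat)%type n is Some ab
  then xget 0 [set g | iso tau g ab] else 0.
change ((@lebesgue_measure R).-negligible (~` [set x | 0 < x -> cantor_set (Dset x tau)])).
have [N [mN N0 sN]] := negligible_bigcup (fun n => negl1 (gs n)).
exists N; split => //; apply: subset_trans sN.
  move=> g /= /not_implyP[g0 nc].
  have : ~ (Dset g tau `<=` limit_point (Dset g tau)).
    by move=> h; apply: nc; split; [exact: Dset_closed | split; [exact: Dset_td|]].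
  move=> /existsNP[al /not_implyP[Da nlp]].
  have [ab iab] := isolated_iso g0 Da nlp.
  exists (pickle ab) => //=; rewrite /gs pickleK /=.
  apply/esym/xget_unique => //= y iy; exact: iso_uniq t3 iy iab.
Qed.
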